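(* Let $\Gamma$ be a countable discrete group and $\mu$ a probability measure on $\Gamma$ with $\mu(e)>0$. If $0\neq T\in\mathcal B(\ell^2(\Gamma))$ and $\lambda\in\mathbb T$ satisfy $\mathcal P_\mu(T)=\lambda T$, then $\lambda=1$.
   Context: $\rho$ denotes the right regular representation of $\Gamma$ on $\ell^2(\Gamma)$, $\rho_g\delta_x=\delta_{xg^{-1}}$. The Markov operator $\mathcal P_\mu:\mathcal B(\ell^2(\Gamma))\to\mathcal B(\ell^2(\Gamma))$ is $\mathcal P_\mu(T)=\sum_{g\in\Gamma}\mu(g)\rho_gT\rho_g^*$. *)

(* Defs.v *)
From HB Require Import structures.
From mathcomp Require Import all_boot all_order all_algebra.
From mathcomp Require Import reals.
From mathcomp Require Import complex.

Set Implicit Arguments.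
Unset Strict Implicit.
Unset Printing Implicit Defensive.
Import Order.TTheory GRing.Theory Num.Theory.
Local Open Scope ring_scope.

(* Unconditional (net) convergence of a family indexed by an arbitrary
   eqType: s = \sum_{g} c g  in the sense of finite partial sums. *)
Definition hasSum (G : eqType) (V : numDomainType) (c : G -> V) (s : V) : Prop :=
  forall e : V, 0 < e ->
    exists F0 : seq G, forall F : seq G, uniq F -> {subset F0 <= F} ->
      `|\sum_(g <- F) c g - s| < e.

Definition l2 (G : eqType) (R : realType) (f : G -> R[i]) : Prop :=
  exists M : R[i], forall F : seq G, uniq F -> \sum_(g <- F) `|f g| ^+ 2 <= M.

(* B(ell^2(G)): a map on functions that is linear and bounded on ell^2.
   (Two such maps denote the same operator iff they agree on ell^2.) *)
Definition bounded_op (G : eqType) (R : realType)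
    (T : (G -> R[i]) -> (G -> R[i])) : Prop :=
  (forall (a : R[i]) (f h : G -> R[i]), l2 f -> l2 h ->
      T (fun x => a * f x + h x) = (fun x => a * T f x + T h x)) /\
  (exists K : R[i], forall (f : G -> R[i]) (M : R[i]),
      (forall F : seq G, uniq F -> \sum_(g <- F) `|f g| ^+ 2 <= M) ->
      forall F : seq G, uniq F -> \sum_(g <- F) `|T f g| ^+ 2 <= K * M).

(* right regular representation: rho_g delta_x = delta_{x g^-1},
   i.e. (rho_g f)(y) = f (y g); rho_g^* = rho_{g^-1}. *)
Definition rho (G : groupType) (R : realType) (g : G) (f : G -> R[i]) : G -> R[i] :=
  fun y => f (y * g)%g.

(* "P_mu(T) = S" : S is the operator sum_g mu(g) rho_g T rho_g^*, the series
   being evaluated (it converges in norm) on every vector of ell^2, coordinatewise. *)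
Definition markov_eq (G : groupType) (R : realType) (mu : G -> R)
    (T S : (G -> R[i]) -> (G -> R[i])) : Prop :=
  forall f : G -> R[i], l2 f -> forall x : G,
    hasSum (fun g : G => (mu g)%:C%C * rho g (T (rho (g^-1)%g f)) x) (S f x).

Definition op_is_zero (G : eqType) (R : realType) (T : (G -> R[i]) -> (G -> R[i])) : Prop :=
  forall f : G -> R[i], l2 f -> T f = (fun _ => 0).

(* Main.v *)
Require Import Defs.
From HB Require Import structures.
From mathcomp Require Import all_boot all_order all_algebra.
From mathcomp Require Import reals complex.
From mathcomp Require Import classical_sets.
From mathcomp Require Import ring lra.
From Stdlib Require Import FunctionalExtensionality Classical.
Import Order.TTheory GRing.Theory Num.Theory.
Local Open Scope ring_scope.
Local Open Scope complex_scope.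

Section Aux.
Variables (R : realType) (G : groupType).
Implicit Types f h : G -> R[i].

Lemma normE (z : R[i]) : `|z| = (complex.Re `|z|)%:C.
Proof. by rewrite RRe_real ?normr_real. Qed.

Definition S1 f := forall F : seq G, uniq F -> \sum_(g <- F) `|f g| ^+ 2 <= 1.

Lemma S1_l2 f : S1 f -> l2 f.
Proof. by move=> Sf; exists 1. Qed.

Lemma S1_rho g f : S1 f -> S1 (rho g f).
Proof.
move=> Sf F uF; rewrite /rho.
rewrite -(big_map (fun y => (y * g)%g) xpredT (fun z => `|f z| ^+ 2)).
apply: Sf; rewrite map_inj_uniq // => y z; exact: mulIg.
Qed.

Lemma rho1 f : rho (1%g^-1)%g f = f.
Proof. by apply: functional_extensionality => y; rewrite /rho invg1 mulg1. Qed.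

Lemma T0 (T : (G -> R[i]) -> (G -> R[i])) : bounded_op T -> T (fun _ => 0) = (fun _ => 0).
Proof.
case=> lin _.
have l0 : l2 (fun _ : G => 0 : R[i]).
  by exists 0 => F _; rewrite big1 // => g _; rewrite normr0 expr0n.
have := lin 1 _ _ l0 l0.
have -> : (fun x : G => 1 * 0 + 0) = (fun _ => 0 : R[i]).
  by apply: functional_extensionality => x; rewrite mul1r addr0.
move=> E; apply: functional_extensionality => x.
have := congr1 (fun F => F x) E => /=; rewrite mul1r.
set t := T _ x => h; apply: (@addrI _ t); by rewrite addr0 -h.
Qed.

Lemma Tscale (T : (G -> R[i]) -> (G -> R[i])) c f : bounded_op T -> l2 f ->
  T (fun x => c * f x) = (fun x => c * T f x).
Proof.
move=> Tb lf; have T00 := @T0 T Tb; case: Tb => lin _.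
have l0 : l2 (fun _ : G => 0 : R[i]).
  by exists 0 => F _; rewrite big1 // => g _; rewrite normr0 expr0n.
have := lin c _ _ lf l0; rewrite T00.
have -> : (fun x : G => c * f x + 0) = (fun x => c * f x).
  by apply: functional_extensionality => x; rewrite addr0.
move=> ->; apply: functional_extensionality => x; by rewrite addr0.
Qed.

End Aux.
Theorem theorem2p2 (R : realType) (G : groupType)
    (G_countable : exists e : nat -> G, forall g : G, exists n : nat, e n = g)
    (mu : G -> R) (mu_ge0 : forall g : G, 0 <= mu g) (mu_sum1 : hasSum mu 1)
    (mu_e : 0 < mu 1%g)
    (T : (G -> R[i]) -> (G -> R[i])) (T_bdd : bounded_op T)
    (T_ne0 : ~ op_is_zero T)
    (lambda : R[i]) (lambda_T : `|lambda| = 1)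
    (hP : markov_eq mu T (fun f x => lambda * T f x)) :
  lambda = 1.
Proof.
set a := mu 1%g.
pose S := @S1 R G.
have nE (z : R[i]) : `|z| = (complex.Re `|z|)%:C := @normE R z.
have ge0 (z : R[i]) : 0 <= complex.Re `|z|.
  by have := normr_ge0 z; rewrite nE ler0c.
have gt0 (z : R[i]) : z != 0 -> 0 < complex.Re `|z|.
  by move=> nz; have := normr_gt0 z; rewrite nz nE ltcE => /andP[_].
have [B HB] : exists B : R, forall f, S f -> forall x, complex.Re `|T f x| <= B.
  case: (T_bdd) => _ [K HK]; exists (1 + complex.Re K) => f Sf x.
  have := HK f 1 Sf [:: x] isT; rewrite big_cons big_nil addr0 mulr1.
  rewrite nE -rmorphXn lecE => /andP[_] /=.
  have := ge0 (T f x); set t := complex.Re _ => t0 tK; nra.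
have [f0 [x0 [Sf0 pos0]]] : exists f x, S f /\ 0 < complex.Re `|T f x|.
  have [f [lf Tf]] : exists f, l2 f /\ T f <> (fun _ => 0).
    apply: NNPP => H; apply: T_ne0 => f lf; apply: NNPP => Tf; apply: H; by exists f.
  have [x Tfx] : exists x, T f x <> 0.
    apply: NNPP => H; apply: Tf; apply: functional_extensionality => x.
    by apply: NNPP => H'; apply: H; exists x.
  case: lf => M HM.
  have M0 : 0 <= M by have := HM [::] isT; rewrite big_nil.
  have Mr : M = (complex.Re M)%:C by rewrite RRe_real // ger0_real.
  set m := complex.Re M in Mr.
  have m0 : 0 <= m by rewrite -lecR -Mr.
  set c : R := (1 + m)^-1.
  have c0 : 0 < c by rewrite invr_gt0; lra.
  have lf : l2 f by exists M.
  exists (fun y => c%:C * f y), x; split.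
    move=> F uF.
    have -> : \sum_(g <- F) `|c%:C * f g| ^+ 2 = (c ^+ 2)%:C * \sum_(g <- F) `|f g| ^+ 2.
      rewrite mulr_sumr; apply: eq_bigr => g _.
      by rewrite normrM exprMn ger0_norm ?ler0c ?ltW // rmorphXn.
    apply: (le_trans (y := (c ^+ 2)%:C * M)).
      by rewrite ler_wpM2l ?HM // ler0c exprn_ge0 // ltW.
    rewrite Mr -rmorphM lecR.
    have -> : c ^+ 2 * m = m / (1 + m) ^+ 2 by rewrite /c exprVn mulrC.
    rewrite ler_pdivrMr; last by rewrite exprn_gt0 //; lra.
    nra.
  rewrite (@Tscale R G T c%:C f T_bdd lf) normrM ger0_norm ?ler0c ?ltW //.
  rewrite -rmorphM /= mulr_gt0 //; exact: gt0 (introN eqP Tfx).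

pose E : set R := fun r : R => exists f x, S f /\ r = complex.Re `|T f x|.
have hsE : has_sup E.
  split; first by exists (complex.Re `|T f0 x0|), f0, x0.
  by exists B => r [f [x [Sf ->]]]; exact: HB.
set N := sup E.
have ubN f : S f -> forall x, complex.Re `|T f x| <= N.
  by move=> Sf x; apply: (sup_upper_bound hsE); exists f, x.
have Npos : 0 < N by apply: lt_le_trans pos0 (ubN _ Sf0 x0).
have ltc0R (k : R) : 0 < k -> 0 < k%:C by move=> k0; rewrite ltcE /= eqxx.
set d := complex.Re `|lambda - a%:C|.
have key f : S f -> forall x, d * complex.Re `|T f x| <= (1 - a) * N.
  move=> Sf x; apply/ler_addgt0Pr => e e0.
  have N1 : 0 < 1 + N by lra.
  set e' := e / (1 + N).
  have e1 : 0 < e' by rewrite divr_gt0.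
  have [F0 HF0] := hP f (@S1_l2 R G f Sf) x (e'%:C) (ltc0R _ e1).
  have [F1 HF1] := mu_sum1 e' e1.
  set F := undup (1%g :: F0 ++ F1).
  have uF : uniq F := undup_uniq _.
  have s0 : {subset F0 <= F} by move=> g g0; rewrite mem_undup inE mem_cat g0 orbT.
  have s1 : {subset F1 <= F} by move=> g g0; rewrite mem_undup inE mem_cat g0 !orbT.
  have i1 : 1%g \in F by rewrite mem_undup inE eqxx.
  have A := HF0 F uF s0.
  have Bm := HF1 F uF s1.
  rewrite (bigD1_seq 1%g) //= in A.
  rewrite (bigD1_seq 1%g) //= in Bm.
  have c1 : (mu 1%g)%:C * rho 1%g (T (rho (1%g^-1)%g f)) x = a%:C * T f x.
    by rewrite rho1 /rho mulg1.
  rewrite c1 in A.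
  set Q := \sum_(g <- F | g != 1%g) (mu g)%:C * rho g (T (rho (g^-1)%g f)) x.
  set q := \sum_(g <- F | g != 1%g) mu g.
  have hQ : `|Q| <= (q * N)%:C.
    apply: le_trans (ler_norm_sum _ _ _) _.
    rewrite /q mulr_suml rmorph_sum; apply: ler_sum => g _.
    rewrite normrM ger0_norm ?ler0c // rmorphM ler_wpM2l ?ler0c // nE lecR.
    rewrite /rho; apply: ubN; exact: (@S1_rho R G).
  have hmain : (d * complex.Re `|T f x|)%:C <= (e' + q * N)%:C.
    rewrite rmorphM; change (d%:C * (complex.Re `|T f x|)%:C <= (e' + q * N)%:C).
    rewrite /d -!nE -normrM rmorphD; change (`|(lambda - a%:C) * T f x| <= e'%:C + (q * N)%:C).
    have -> : (lambda - a%:C) * T f x = - (a%:C * T f x + Q - lambda * T f x) + Q.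
      by rewrite mulrBl; ring.
    apply: le_trans (ler_normD _ _) _; rewrite normrN.
    by apply: lerD => //; apply: ltW.
  rewrite lecR in hmain.
  have qle : q <= 1 + e' - a.
    have := ler_norm (a + q - 1); move: Bm; lra.
  have := ler_wpM2r (ltW Npos) qle.
  have ee : e' * (1 + N) = e by rewrite /e' divfK // gt_eqF.
  nra.
have d0 : 0 <= d := ge0 _.
have dN : d * N <= (1 - a) * N.
  apply/ler_addgt0Pr => e e0.
  have e2 : 0 < e / (d + 1) by rewrite divr_gt0 //; lra.
  have [r [f [x [Sf ->]]] hr] := sup_adherent e2 hsE.
  have := key f Sf x.
  have := ler_wpM2l d0 (ltW hr).
  have : d * (e / (d + 1)) <= e.
    by rewrite mulrA ler_pdivrMr; [nra | lra].
  rewrite mulrBr -/N; lra.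
have dle : d <= 1 - a by rewrite -(ler_pM2r Npos).
move: lambda_T dle; rewrite /d; case: (lambda) => u v.
rewrite !normc_def /= => /(congr1 (@complex.Re R)) /= H1 H2.
have X0 : 0 <= u ^+ 2 + v ^+ 2 by rewrite addr_ge0 // sqr_ge0.
have Y0 : 0 <= (u - a) ^+ 2 + (v - 0) ^+ 2 by rewrite addr_ge0 // sqr_ge0.
have := sqr_sqrtr X0; rewrite H1 expr1n => Hx.
have := sqr_sqrtr Y0; have := sqrtr_ge0 ((u - a) ^+ 2 + (v - 0) ^+ 2).
move: H2; set s := Num.sqrt _ => H2 s0 Hy.
have h0 : 0 <= 1 - a by apply: le_trans s0 H2.
have h1 : (u - a) ^+ 2 + (v - 0) ^+ 2 <= (1 - a) ^+ 2.
  by rewrite -Hy; rewrite ler_pXn2r // nnegrE.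
have h2 : a * 1 <= a * u by move: h1; rewrite subr0; nra.
have ua : 1 <= u by rewrite -(ler_pM2l mu_e).
have u1 : u <= 1 by nra.
have v0 : v ^+ 2 = 0 by nra.
apply/eqP; rewrite eq_complex /=; apply/andP; split; apply/eqP; first by lra.
by move: v0 => /eqP; rewrite sqrf_eq0 => /eqP.
Qed.
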